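(* Assume the loss $L$ satisfies the regularity conditions (C1)–(C4) below, that $\theta\mapsto L(\theta\mid x,y)$, $\theta\mapsto E_{(X,Y)\sim\mathbb{P}}L(\theta\mid X,Y)$ and $\theta\mapsto\pi(\theta,\lambda)$ are (sub)differentiable, and that the model is over-parameterized with respect to $\hat{\mathbb{P}}$, i.e. $\Theta_*\cap\Theta_\Lambda\neq\emptyset$. Then the AM estimator $\theta^*_{AM}=\mathfrak{A}_\theta(\hat{\mathbb{P}},\mathbb{P})$ satisfies $\theta^*_{AM}\in\Theta_*$. Moreover, if the loss is the negative log-likelihood, $L(\theta\mid x,y)=-\log p'(\theta\mid x,y)$, then for every $\theta^*\in\Theta_*$, $$D_{KL}(\mathbb{P},\mathbb{P}_{\theta^*_{AM}})=D_{KL}(\mathbb{P},\mathbb{P}_{\theta^*}).$$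
   Context: A sample $S=\{(x_i,y_i)\}_{i=1}^n$ is drawn i.i.d. from an unknown population $\mathbb{P}$ on $\mathbf{W}\subset\mathbb{R}^{k}\times\mathbb{R}^{q}$; $\hat{\mathbb{P}}$ denotes its empirical distribution. A parametric model $\{\mathbb{P}_\theta:\theta\in\Theta\}$, $\Theta=\Theta^{(n)}\subseteq\mathbb{R}^p$, with likelihood $p'(\theta\mid x,y)$ and loss $L(\theta\mid x,y)$ is given. $\Theta_*=\Theta^{(n)}_*=\{\theta\in\Theta: E_{\mathbb{P}}L(\theta\mid X,Y)=\min_{\tilde\theta\in\Theta}E_{\mathbb{P}}L(\tilde\theta\mid X,Y)\}$ (the ''most plausible'' parameters). A duality function $\pi(\theta,\lambda)$, $\theta\in\Theta$, $\lambda\in\Lambda$ (hyper-parameter set) is fixed. For distributions $\mathbb{P}_{obs},\mathbb{P}_{fut}$ define $G_{\mathbb{P}_{obs}}(\theta,\lambda)=E_{\mathbb{P}_{obs}}L(\theta\mid X,Y)+\pi(\theta,\lambda)$ and $V_{\mathbb{P}_{fut},\mathbb{P}_{obs}}(\theta,\lambda)=E_{\mathbb{P}_{fut}}L(\theta\mid X,Y)-E_{\mathbb{P}_{obs}}L(\theta\mid X,Y)-\pi(\theta,\lambda)$. An AM equilibrium pair for $(\mathbb{P}_{obs},\mathbb{P}_{fut})$ is $(\hat\theta,\hat\lambda)$ with $\hat\theta\in\arg\min_\theta G_{\mathbb{P}_{obs}}(\theta,\hat\lambda)$ and $\hat\lambda\in\arg\min_{\lambda\in\Lambda}\sum_{i=1}^p\left|\partial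 V_{\mathbb{P}_{fut},\mathbb{P}_{obs}}(\theta,\lambda)/\partial\theta_i\right|_{\theta=\hat\theta}$. The AM operator $\mathfrak{A}_\theta(\mathbb{P}_{obs},\mathbb{P}_{fut})\in\mathbb{R}^p$ returns the $\hat\theta$ of an AM equilibrium pair that is globally optimal for $E_{\mathbb{P}_{fut}}L(\theta\mid X,Y)$ among equilibrium pairs (global optimality is assumed). $\Theta_\Lambda=\{\theta\in\Theta: G_{\hat{\mathbb{P}}}(\theta,\lambda)=\min_{\tilde\theta\in\Theta}G_{\hat{\mathbb{P}}}(\tilde\theta,\lambda)\text{ for some }\lambda\in\Lambda\}$. Regularity conditions: (C1) for each $\theta$, $L(\theta\mid\cdot)$ is Borel measurable on $\mathbf{W}$; (C2) for each $(x,y)\in\mathbf{W}$, $L(\cdot\mid x,y)$ is continuous on $\Theta$; (C3) $|L(\theta\mid x,y)|<b(x,y)$ for all $\theta$, with $b\ge0$ and $E|b(X,Y)|<\infty$; (C4) $\arg\min_{\theta\in\Theta}E_{\mathbb{P}}L(\theta\mid X,Y)$ exists. $D_{KL}$ is Kullback–Leibler divergence. *)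

(* Defs.v *)
From HB Require Import structures.
From mathcomp Require Import all_boot all_order all_algebra.
From mathcomp Require Import all_classical all_reals all_analysis.
Set Implicit Arguments. Unset Strict Implicit. Unset Printing Implicit Defensive.
Import Order.TTheory GRing.Theory Num.Theory.
Import numFieldNormedType.Exports.
Local Open Scope classical_set_scope.
Local Open Scope ring_scope.

Section AMDefs.
Variable R : realType.


Definition partial (p : nat) (f : 'rV[R]_p -> R) (i : 'I_p) (th : 'rV[R]_p) : R :=
  'D_(delta_mx 0 i) f th.

Definition grad_l1 (p : nat) (f : 'rV[R]_p -> R) (th : 'rV[R]_p) : R :=
  \sum_(i < p) `| partial f i th |.

Definition pop_risk (d : measure_display) (T : measurableType d)
  (P : probability T R) (W : set T) (p : nat) (L : 'rV[R]_p -> T -> R)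
  (th : 'rV[R]_p) : R :=
  Rintegral P W (L th).

(* E_{\hat P} L(theta | X, Y) for the empirical distribution of the sample S *)
Definition emp_risk (T : Type) (n : nat) (S : 'I_n -> T) (p : nat)
  (L : 'rV[R]_p -> T -> R) (th : 'rV[R]_p) : R :=
  (n%:R)^-1 * \sum_(i < n) L th (S i).

Definition Gfun (p : nat) (Lam : Type) (Eobs : 'rV[R]_p -> R)
  (pi : 'rV[R]_p -> Lam -> R) (th : 'rV[R]_p) (la : Lam) : R :=
  Eobs th + pi th la.

Definition Vfun (p : nat) (Lam : Type) (Efut Eobs : 'rV[R]_p -> R)
  (pi : 'rV[R]_p -> Lam -> R) (th : 'rV[R]_p) (la : Lam) : R :=
  Efut th - Eobs th - pi th la.

(* (th, la) is an AM equilibrium pair for (P_obs, P_fut), where Eobs, Efut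
   are the expected-loss functions theta |-> E_{P_obs} L, E_{P_fut} L. *)
Definition AM_equilibrium (p : nat) (Lam : Type) (Theta : set 'rV[R]_p)
  (Lset : set Lam) (Eobs Efut : 'rV[R]_p -> R) (pi : 'rV[R]_p -> Lam -> R)
  (th : 'rV[R]_p) (la : Lam) : Prop :=
  [/\ Theta th, Lset la,
      (forall t, Theta t -> Gfun Eobs pi th la <= Gfun Eobs pi t la) &
      (forall l, Lset l ->
         grad_l1 (fun t => Vfun Efut Eobs pi t la) th
         <= grad_l1 (fun t => Vfun Efut Eobs pi t l) th)].

Definition AM_operator (p : nat) (Lam : Type) (Theta : set 'rV[R]_p)
  (Lset : set Lam) (Eobs Efut : 'rV[R]_p -> R) (pi : 'rV[R]_p -> Lam -> R)
  (th : 'rV[R]_p) : Prop :=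
  (exists2 la, Lset la & AM_equilibrium Theta Lset Eobs Efut pi th la) /\
  (forall th' la', AM_equilibrium Theta Lset Eobs Efut pi th' la' ->
     Efut th <= Efut th').

Definition Theta_star (p : nat) (Theta : set 'rV[R]_p) (Epop : 'rV[R]_p -> R)
  : set 'rV[R]_p :=
  [set th | Theta th /\ forall t, Theta t -> Epop th <= Epop t].

Definition Theta_Lambda (p : nat) (Lam : Type) (Theta : set 'rV[R]_p)
  (Lset : set Lam) (Eemp : 'rV[R]_p -> R) (pi : 'rV[R]_p -> Lam -> R)
  : set 'rV[R]_p :=
  [set th | Theta th /\ exists2 la, Lset la &
     forall t, Theta t -> Gfun Eemp pi th la <= Gfun Eemp pi t la].

Definition has_density (d : measure_display) (T : measurableType d)
  (mu : {measure set T -> \bar R}) (Q : set T -> \bar R) (q : T -> R) : Prop :=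
  [/\ (forall x, 0 <= q x), measurable_fun setT q &
      forall A, measurable A -> Q A = (\int[mu]_(x in A) (q x)%:E)%E].

(* Kullback-Leibler divergence D_KL(P, Q) = E_P [ log (dP/dQ) ], where
   p and q are densities of P and Q w.r.t. a common base measure (so that
   dP/dQ = p / q). *)
Definition KL_div (d : measure_display) (T : measurableType d)
  (P : {measure set T -> \bar R}) (p q : T -> R) : \bar R :=
  (\int[P]_x (ln (p x / q x))%:E)%E.

End AMDefs.

(* Main.v *)
Require Import Defs.
From HB Require Import structures.
From mathcomp Require Import all_boot all_order all_algebra.
From mathcomp Require Import all_classical all_reals all_analysis.
From mathcomp Require Import measurable_realfun.
Import Order.TTheory GRing.Theory Num.Theory.
Import numFieldNormedType.Exports.
Local Open Scope classical_set_scope.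
Local Open Scope ring_scope.

Lemma deriv_min0 (R : realType) (p : nat) (Theta : set 'rV[R]_p)
  (f : 'rV[R]_p -> R) (th0 v : 'rV[R]_p) :
  open Theta -> Theta th0 ->
  (forall t, Theta t -> derivable f t v) ->
  (forall t, Theta t -> f th0 <= f t) -> 'D_v f th0 = 0.
Proof.
move=> oT T0 df fmin.
pose g := fun r : R => f (th0 + r *: v).
have near0 : \forall r \near (0:R), Theta (th0 + r *: v).
  have : (fun r : R => th0 + r *: v) @ (0:R) --> th0 + 0 *: v.
    apply: cvgD; first exact: cvg_cst.
    by apply: cvgZr_tmp; exact: cvg_id.
  rewrite scale0r addr0 => /(_ Theta); apply.
  by apply: open_nbhs_nbhs; split.
have /nbhs_ballP[e e0 He] := near0.
have gD : forall t, Theta (th0 + t *: v) -> derivable g t 1 = derivable f (th0 + t *: v) v.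
  move=> t _.
  have E : (fun h : R => h^-1 *: ((g \o shift t) (h *: 1) - g t)) =
    (fun h => h^-1 *: ((f \o shift (th0 + t *: v)) (h *: v) - f (th0 + t *: v))).
    apply/funext => h /=; rewrite /g /= scaler1 scalerDl addrA [_ + h *: v]addrC addrA.
  by rewrite [th0 + _]addrC.
  by rewrite /derivable E.
have gD1 : 'D_1 g 0 = 'D_v f th0.
  have E : (fun h : R => h^-1 *: ((g \o shift 0) (h *: 1) - g 0)) =
    (fun h => h^-1 *: ((f \o shift th0) (h *: v) - f th0)).
    apply/funext => h /=; rewrite /g /= scaler1 addr0 scale0r addr0.
    by rewrite [h *: v + _]addrC.
  by rewrite /derive E.
rewrite -gD1.
have inb : forall t, t \in `](- e), e[%R -> Theta (th0 + t *: v).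
  move=> t; rewrite in_itv /= => /andP[h1 h2]; apply: He.
  rewrite /ball /= sub0r normrN; rewrite ltr_norml h1 h2 //.
apply: derive_val.
apply: (@derive1_at_min _ g (- e) e 0).
- by apply: (le_trans (y:=0)); rewrite ?oppr_le0 ltW.
- by move=> t /inb Tt; rewrite gD //; exact: df.
- by rewrite in_itv /= oppr_lt0 e0.
- by move=> t /inb Tt; rewrite /g scale0r addr0; exact: fmin.
Qed.

Lemma ext_eq (R : realType) (a1 b1 a2 b2 : \bar R) :
  (0 <= a1)%E -> (0 <= b1)%E -> (0 <= a2)%E -> (0 <= b2)%E ->
  (a1 < +oo)%E = (a2 < +oo)%E -> (b1 < +oo)%E = (b2 < +oo)%E ->
  ~~ ((a1 < +oo)%E && (b1 < +oo)%E) -> (a1 - b1 = a2 - b2)%E.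
Proof.
move=> a10 b10 a20 b20 ea eb.
case: (boolP (b1 < +oo)%E) => hb1; rewrite ?andbT ?andbF //= => ha1.
- have hb2 : (b2 < +oo)%E by rewrite -eb.
  have ha2 : ~~ (a2 < +oo)%E by rewrite -ea.
  move: ha1 ha2; rewrite !ltey !negbK => /eqP -> /eqP ->.
  have f1 : (- b1)%E \is a fin_num by rewrite fin_numN ge0_fin_numE.
  have f2 : (- b2)%E \is a fin_num by rewrite fin_numN ge0_fin_numE.
  by rewrite !addye // ?(fin_numN_eq f1) ?(fin_numN_eq f2); move: f1 f2; rewrite !fin_numE => /andP[+ _] /andP[+ _].
- have hb2 : ~~ (b2 < +oo)%E by rewrite -eb.
  move: hb1 hb2; rewrite !ltey !negbK => /eqP -> /eqP ->.
  by rewrite !addeNy.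
Qed.

Section K.
Context d (T : measurableType d) (R : realType) (mu : {measure set T -> \bar R}).

Lemma pos_fin (D : set T) (g h : T -> R) : measurable D -> measurable_fun D g ->
  mu.-integrable D (EFin \o h) ->
  (\int[mu]_(x in D) (EFin \o g)^\+ x < +oo)%E ->
  (\int[mu]_(x in D) (EFin \o (g \+ h)%R)^\+ x < +oo)%E.
Proof.
move=> mD mg ih gfin.
have mh : measurable_fun D h by apply/measurable_EFinP; exact: measurable_int ih.
have /integrableP[_ hfin] := ih.
have H : (\int[mu]_(x in D) (EFin \o (g \+ h)%R)^\+ x <= \int[mu]_(x in D) ((EFin \o g)^\+ x + `|(EFin \o h) x|))%E.
  apply: ge0_le_integral => //.
  - by apply: measurable_funepos; apply/measurable_EFinP; exact: measurable_funD.
  - apply: emeasurable_funD; first by apply: measurable_funepos; exact/measurable_EFinP.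
    by apply: measurableT_comp => //; exact/measurable_EFinP.
  move=> x _; rewrite !funeposE /= -[0%R]/(0%:E) -!EFin_max -EFinD lee_fin.
  rewrite ge_max; apply/andP; split; last by rewrite addr_ge0 // le_max lexx orbT.
  by rewrite lerD // ?le_max ?lexx // ler_norm.
apply: (le_lt_trans H); rewrite ge0_integralD //.
- exact: lte_add_pinfty.
- by apply: measurable_funepos; exact/measurable_EFinP.
- by apply: measurableT_comp => //; exact/measurable_EFinP.
Qed.


Lemma negE (u : T -> R) : ((EFin \o u)^\- = (EFin \o (fun x => (- u x)%R))^\+)%E.
Proof. by apply/funext => x; rewrite funenegE funeposE /= EFinN. Qed.

Lemma pos_iff (D : set T) (g h : T -> R) : measurable D -> measurable_fun D g ->
  mu.-integrable D (EFin \o h) ->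
  (\int[mu]_(x in D) (EFin \o g)^\+ x < +oo)%E =
  (\int[mu]_(x in D) (EFin \o (g \+ h)%R)^\+ x < +oo)%E.
Proof.
move=> mD mg ih; apply/idP/idP; first exact: pos_fin.
have mh : measurable_fun D h by apply/measurable_EFinP; exact: measurable_int ih.
have ih' : mu.-integrable D (EFin \o (fun x => - h x)).
  have -> : EFin \o (fun x => - h x) = (-%E \o (EFin \o h)).
    by apply/funext => x /=; rewrite EFinN.
  exact: integrableN.
move=> /(pos_fin _ _ _ mD _ ih'); rewrite (_ : ((g \+ h) \+ (fun x => - h x))%R = g).
  by apply; apply: measurable_funD.
by apply/funext => x /=; rewrite addrK.
Qed.

Lemma key (D : set T) (g h1 h2 : T -> R) : measurable D -> measurable_fun D g ->
  mu.-integrable D (EFin \o h1) -> mu.-integrable D (EFin \o h2) ->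
  (\int[mu]_(x in D) (h1 x)%:E = \int[mu]_(x in D) (h2 x)%:E)%E ->
  (\int[mu]_(x in D) (g x + h1 x)%:E = \int[mu]_(x in D) (g x + h2 x)%:E)%E.
Proof.
move=> mD mg i1 i2 e12.
have [ig|nig] := pselect (mu.-integrable D (EFin \o g)).
  rewrite (eq_integral (fun x => (g x)%:E + (h1 x)%:E)%E); last by move=> x _; rewrite EFinD.
  rewrite [RHS](eq_integral (fun x => (g x)%:E + (h2 x)%:E)%E); last by move=> x _; rewrite EFinD.
  by rewrite !integralD // e12.
have mh1 : measurable_fun D h1 by apply/measurable_EFinP; exact: measurable_int i1.
have mh2 : measurable_fun D h2 by apply/measurable_EFinP; exact: measurable_int i2.
have iN : forall h, mu.-integrable D (EFin \o h) -> mu.-integrable D (EFin \o (fun x => - h x)).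
  move=> h ih; have -> : EFin \o (fun x => - h x) = (-%E \o (EFin \o h)).
    by apply/funext => x /=; rewrite EFinN.
  exact: integrableN.
have mgN : measurable_fun D (fun x => - g x) by apply: measurable_funN.
have negi : forall h, mu.-integrable D (EFin \o h) ->
  (\int[mu]_(x in D) (EFin \o g)^\- x < +oo)%E =
  (\int[mu]_(x in D) (EFin \o (g \+ h)%R)^\- x < +oo)%E.
  move=> h ih; rewrite !negE (pos_iff _ _ _ mD mgN (iN _ ih)).
  by congr (_ < _)%E; apply: eq_integral => x _; rewrite !funeposE /= opprD.
rewrite (integralE _ _ (EFin \o (g \+ h1)%R)) (integralE _ _ (EFin \o (g \+ h2)%R)).
have nn : forall u : T -> \bar R, (0 <= \int[mu]_(x in D) u^\+ x)%E.
  by move=> u; apply: integral_ge0 => x _; exact: funepos_ge0.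
have nn' : forall u : T -> \bar R, (0 <= \int[mu]_(x in D) u^\- x)%E.
  by move=> u; apply: integral_ge0 => x _; exact: funeneg_ge0.
apply: ext_eq => //.
- by rewrite -(pos_iff _ _ _ mD mg i1) -(pos_iff _ _ _ mD mg i2).
- by rewrite -(negi _ i1) -(negi _ i2).
rewrite -(pos_iff _ _ _ mD mg i1) -(negi _ i1); apply/negP => /andP[pf nf].
apply: nig; apply/integrableP; split; first exact/measurable_EFinP.
rewrite (eq_integral ((EFin \o g)^\+ \+ (EFin \o g)^\-)%E); last first.
  by move=> x _; rewrite -[LHS]/((abse \o (EFin \o g)) x) fune_abse.
rewrite ge0_integralD //.
- exact: lte_add_pinfty.
- by apply: measurable_funepos; exact/measurable_EFinP.
- by apply: measurable_funeneg; exact/measurable_EFinP.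
Qed.

End K.

Lemma KL_rewrite d (T : measurableType d) (R : realType) (P : probability T R)
  (W : set T) (mu : {measure set T -> \bar R}) (pP l L : T -> R) :
  measurable W -> P W = 1%E -> has_density mu P pP ->
  measurable_fun setT l -> (forall x, 0 <= l x) ->
  measurable_fun W L ->
  (forall x, W x -> 0 < l x) -> (forall x, W x -> L x = - ln (l x)) ->
  KL_div P pP l = (\int[P]_x (ln (pP x) + (L \_ W) x)%:E)%E.
Proof.
move=> mW PW [pP0 mpP dP] ml l0 mL lpos Lnll.
rewrite /KL_div; apply: ae_eq_integral => //.
- apply/measurable_EFinP; apply: measurableT_comp => //.
  have -> : (fun x => pP x / l x) = (pP \* (fun x => l x `^ (-1)))%R.
    by apply/funext => x /=; rewrite powR_inv1.
  apply: measurable_funM => //.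
  rewrite (_ : (fun x => l x `^ (-1)) = (fun y : R => y `^ (-1)) \o l) //.
  by apply: measurableT_comp => //; exact: measurable_powR.
- apply/measurable_EFinP; apply: measurable_funD.
    exact: measurableT_comp.
  by apply/(measurable_restrictT _ mW).
have mZ : measurable (pP @^-1` [set 0]).
  by rewrite -[_ @^-1` _]setTI; apply: mpP => //; exact: measurable_set1.
exists (~` W `|` pP @^-1` [set 0]); split.
- by apply: measurableU => //; exact: measurableC.
- apply/eqP; rewrite eq_le measure_ge0 andbT.
  apply: (le_trans (measureU2 _ (measurableC mW) mZ)).
  have := probability_setC P mW; rewrite PW subee // => PC.
  rewrite -[X in (X + _ <= _)%E]/(P (~` W)) PC add0e.
  rewrite -[X in (X <= _)%E]/(P (pP @^-1` [set 0])) dP //.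
  by rewrite integral0_eq // => x /= ->.
move=> x /=; rewrite -/(~ _) => hx; apply: contrapT => hN; apply: hx => _.
have Wx : W x by apply: contrapT => nW; apply: hN; left.
have pPx : pP x != 0 by apply/eqP => p0; apply: hN; right.
have pPpos : 0 < pP x by rewrite lt_def pPx pP0.
rewrite patchE (mem_set Wx) Lnll // lnM ?posrE ?invr_gt0 ?lpos // lnV ?posrE ?lpos //.
Qed.

Theorem theorem1 (R : realType) (k q p n : nat) (Lam : Type)
  (W : set (k.-tuple R * q.-tuple R)%type)
  (P : probability (k.-tuple R * q.-tuple R)%type R)
  (S : 'I_n -> (k.-tuple R * q.-tuple R)%type)
  (Theta : set 'rV[R]_p) (Lset : set Lam)
  (L : 'rV[R]_p -> (k.-tuple R * q.-tuple R)%type -> R)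
  (pi : 'rV[R]_p -> Lam -> R)
  (b : (k.-tuple R * q.-tuple R)%type -> R)
  (thAM : 'rV[R]_p) :
  (* sample of size n > 0 drawn from P, supported on W *)
  (0 < n)%N ->
  measurable W -> P W = 1%E -> (forall i, W (S i)) ->
  (* the parameter set Theta is an open subset of R^p *)
  open Theta ->
  (* (C1) *)
  (forall th, Theta th -> measurable_fun W (L th)) ->
  (* (C2) *)
  (forall w, W w -> {within Theta, continuous (fun th => L th w)}) ->
  (* (C3) *)
  (forall w, W w -> 0 <= b w) ->
  (forall th w, Theta th -> W w -> `|L th w| < b w) ->
  P.-integrable W (fun w => (b w)%:E) ->
  (* (C4) *)
  (exists th, Theta_star Theta (pop_risk P W L) th) ->
  (* differentiability *)
  (forall w, W w -> forall th, Theta th ->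
     differentiable (fun t => L t w) th) ->
  (forall th, Theta th -> differentiable (pop_risk P W L) th) ->
  (forall la, Lset la -> forall th, Theta th ->
     differentiable (fun t => pi t la) th) ->
  (* over-parameterization w.r.t. the empirical distribution *)
  (Theta_star Theta (pop_risk P W L)
     `&` Theta_Lambda Theta Lset (emp_risk S L) pi) !=set0 ->
  (* thAM = A_theta(\hat P, P) *)
  AM_operator Theta Lset (emp_risk S L) (pop_risk P W L) pi thAM ->
  Theta_star Theta (pop_risk P W L) thAM /\
  (forall (mu : {measure set (k.-tuple R * q.-tuple R)%type -> \bar R})
          (pP : (k.-tuple R * q.-tuple R)%type -> R)
          (lik : 'rV[R]_p -> (k.-tuple R * q.-tuple R)%type -> R)
          (Pm : 'rV[R]_p -> probability (k.-tuple R * q.-tuple R)%type R),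
     has_density mu P pP ->
     (forall th, Theta th -> has_density mu (Pm th) (lik th)) ->
     (forall th w, Theta th -> W w -> 0 < lik th w) ->
     (forall th w, Theta th -> W w -> L th w = - ln (lik th w)) ->
     forall ths, Theta_star Theta (pop_risk P W L) ths ->
       KL_div P pP (lik thAM) = KL_div P pP (lik ths)).
Proof.
move=> n0 mW PW WS oT mL cL b0 Lb ib _ dL dE dpi
  [th0 [[T0 min0] [_ [la0 Lla0 minG]]]] [[la Lla [TAM _ _ _]] optAM].
have dG : forall t, Theta t -> differentiable (fun t => Gfun (emp_risk S L) pi t la0) t.
  move=> t Tt.
  have -> : (fun t0 => Gfun (emp_risk S L) pi t0 la0) =
    (n%:R^-1 *: \sum_(i < n) (fun t0 => L t0 (S i))) + (fun t0 => pi t0 la0).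
    by apply/funext => t0; rewrite /Gfun /emp_risk /= fct_sumE.
  apply: differentiableD; last exact: dpi.
  apply: differentiableZ; apply: differentiable_sum => i; exact: dL.
have eq0 : AM_equilibrium Theta Lset (emp_risk S L) (pop_risk P W L) pi th0 la0.
  split => // l Ll.
  have -> : grad_l1 (fun t => Vfun (pop_risk P W L) (emp_risk S L) pi t la0) th0 = 0.
    rewrite /grad_l1 big1 // => i _; rewrite /partial.
    have -> : (fun t => Vfun (pop_risk P W L) (emp_risk S L) pi t la0) =
      (pop_risk P W L - (fun t => Gfun (emp_risk S L) pi t la0)).
      by apply/funext => t; rewrite /Vfun /Gfun /= opprD addrA.
    rewrite deriveB; last first.
    - exact: diff_derivable (dG _ T0).
    - exact: diff_derivable (dE _ T0).
    rewrite (@deriv_min0 _ _ _ _ _ _ oT T0 (fun t Tt => diff_derivable (dE t Tt)) min0).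
    rewrite (@deriv_min0 _ _ _ _ _ _ oT T0 (fun t Tt => diff_derivable (dG t Tt)) minG).
    by rewrite subrr normr0.
  by rewrite /grad_l1; apply: sumr_ge0 => i _; exact: normr_ge0.
have AMstar : Theta_star Theta (pop_risk P W L) thAM.
  by split => // t Tt; apply: le_trans (optAM _ _ eq0) (min0 _ Tt).
split => //.
move=> mu pP lik Pm hP hPm likpos Lnll ths [Ts mins].
have Ki : forall th, Theta th ->
    KL_div P pP (lik th) = (\int[P]_x (ln (pP x) + (L th \_ W) x)%:E)%E.
  move=> th Tth; have [l0 ml _] := hPm th Tth.
  apply: (@KL_rewrite _ _ _ P W mu pP (lik th) (L th)) => //; first exact: mL.
  - by move=> x; apply: likpos.
  - by move=> x; apply: Lnll.
rewrite (Ki _ TAM) (Ki _ Ts).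
have iLW : forall th, Theta th -> P.-integrable W (EFin \o L th).
  move=> th Tth; apply: le_integrable ib => //; first by apply/measurable_EFinP; exact: mL.
  move=> x Wx /=; rewrite lee_fin (ger0_norm (b0 _ Wx)).
  exact/ltW/Lb.
have iL : forall th, Theta th -> P.-integrable setT (EFin \o (L th \_ W)).
  by move=> th Tth; rewrite -restrict_EFin; apply/(integrable_mkcond _ mW); exact: iLW.
have IE : forall th, Theta th ->
    (\int[P]_x ((L th \_ W) x)%:E = (pop_risk P W L th)%:E)%E.
  move=> th Tth; rewrite /pop_risk /Rintegral fineK; last exact: integrable_fin_num (iLW _ Tth).
  by rewrite integral_mkcond restrict_EFin.
have [_ mpP _] := hP.
apply: (@key _ _ _ P setT (fun x => ln (pP x)) (L thAM \_ W) (L ths \_ W)) => //.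
- exact: measurableT_comp mpP.
- exact: iL.
- exact: iL.
rewrite (IE _ TAM) (IE _ Ts); congr EFin; apply/eqP; rewrite eq_le.
by rewrite (mins _ TAM) (AMstar.2 _ Ts).
Qed.
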